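(* Fix $K\in\mathbb{R}$ and consider the framed curvature flow with $\theta$-velocity $$\upsilon_\theta=-\kappa\psi_2^{-1}K-(\kappa\,\partial_s\psi_3+2\,\partial_s\kappa\,\psi_3)\kappa^{-2}\psi_1-\kappa\psi_2^{-1}\psi_3^2-(\partial_s^2\kappa-\kappa\psi_3^2)\kappa^{-2}\psi_2 .$$ Then the trajectory surface $\Sigma_{\underline t}$ generated by this flow has constant Gaussian curvature equal to $K$.
   Context: $S^1=\mathbb{R}/2\pi\mathbb{Z}$; closed curves $\Gamma_t$ parametrized by $\gamma(t,\cdot):S^1\to\mathbb{R}^3$, $g=\|\partial_u\gamma\|$, $ds=g\,du$, $\partial_s=g^{-1}\partial_u$; Frenet frame $T,N,B$, curvature $\kappa$, torsion $\tau$. For an angle function $\theta$: $\nu_\theta=\cos\theta N+\sin\theta B$, $\psi_1=\kappa\cos\theta$, $\psi_2=\kappa\sin\theta$, $\psi_3=\tau+\partial_s\theta$; the formula for $\upsilon_\theta$ presupposes $\kappa>0$ and $\psi_2\neq0$. Framed curvature flow: $\partial_t\gamma=\kappa\nu_\theta$, $\partial_t\theta=\upsilon_\theta$ on $[0,\underline t)\times S^1$. Trajectory surface $\Sigma_{\underline t}=\bigcup_{t\in[0,\underline t)}\Gamma_t$, parametrized by $\gamma(t,u)$. *)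

(* Defs.v *)
From Stdlib Require Import Reals.
From Coquelicot Require Import Coquelicot.
Open Scope R_scope.

Definition V3 := (R * R * R)%type.
Definition v1 (v : V3) : R := fst (fst v).
Definition v2 (v : V3) : R := snd (fst v).
Definition v3 (v : V3) : R := snd v.
Definition mkV3 (a b c : R) : V3 := (a, b, c).
Definition vadd (v w : V3) : V3 := mkV3 (v1 v + v1 w) (v2 v + v2 w) (v3 v + v3 w).
Definition vscal (a : R) (v : V3) : V3 := mkV3 (a * v1 v) (a * v2 v) (a * v3 v).
Definition dot (v w : V3) : R := v1 v * v1 w + v2 v * v2 w + v3 v * v3 w.
Definition cross (v w : V3) : V3 :=
  mkV3 (v2 v * v3 w - v3 v * v2 w) (v3 v * v1 w - v1 v * v3 w) (v1 v * v2 w - v2 v * v1 w).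
Definition vnorm (v : V3) : R := sqrt (dot v v).

Definition dt (f : R -> R -> R) (t u : R) : R := Derive (fun t' => f t' u) t.
Definition du (f : R -> R -> R) (t u : R) : R := Derive (fun u' => f t u') u.
Definition Dt (X : R -> R -> V3) (t u : R) : V3 :=
  mkV3 (dt (fun a b => v1 (X a b)) t u) (dt (fun a b => v2 (X a b)) t u)
       (dt (fun a b => v3 (X a b)) t u).
Definition Du (X : R -> R -> V3) (t u : R) : V3 :=
  mkV3 (du (fun a b => v1 (X a b)) t u) (du (fun a b => v2 (X a b)) t u)
       (du (fun a b => v3 (X a b)) t u).

(** Smoothness (C^infinity) of a scalar function of (t,u) on a set D (meant open):
    all iterated partial derivatives exist and are continuous on D. *)
Fixpoint Ck (D : R -> R -> Prop) (k : nat) (f : R -> R -> R) : Prop :=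
  (forall t u, D t u -> continuity_2d_pt f t u) /\
  match k with
  | O => True
  | S k' =>
      (forall t u, D t u -> ex_derive (fun t' => f t' u) t) /\
      (forall t u, D t u -> ex_derive (fun u' => f t u') u) /\
      Ck D k' (dt f) /\ Ck D k' (du f)
  end.
Definition smooth_on (D : R -> R -> Prop) (f : R -> R -> R) : Prop := forall k, Ck D k f.
Definition smooth_on3 (D : R -> R -> Prop) (X : R -> R -> V3) : Prop :=
  smooth_on D (fun a b => v1 (X a b)) /\ smooth_on D (fun a b => v2 (X a b)) /\
  smooth_on D (fun a b => v3 (X a b)).

Section Curve.
Variable gam : R -> R -> V3.

Definition gspeed (t u : R) : R := vnorm (Du gam t u).
Definition ds (f : R -> R -> R) (t u : R) : R := du f t u / gspeed t u.
Definition Ds (X : R -> R -> V3) (t u : R) : V3 := vscal (/ gspeed t u) (Du X t u).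

Definition Tan (t u : R) : V3 := Ds gam t u.
Definition curv (t u : R) : R := vnorm (Ds Tan t u).
Definition Nor (t u : R) : V3 := vscal (/ curv t u) (Ds Tan t u).
Definition Bin (t u : R) : V3 := cross (Tan t u) (Nor t u).
Definition tors (t u : R) : R := dot (Ds Nor t u) (Bin t u).

Variable th : R -> R -> R.
Definition nu_th (t u : R) : V3 :=
  vadd (vscal (cos (th t u)) (Nor t u)) (vscal (sin (th t u)) (Bin t u)).
Definition psi1 (t u : R) : R := curv t u * cos (th t u).
Definition psi2 (t u : R) : R := curv t u * sin (th t u).
Definition psi3 (t u : R) : R := tors t u + ds th t u.

Definition upsilon (K : R) (t u : R) : R :=
  let k := curv t u in
  - (k / psi2 t u) * K
  - (k * ds psi3 t u + 2 * ds curv t u * psi3 t u) / (k ^ 2) * psi1 t u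
  - (k / psi2 t u) * (psi3 t u) ^ 2
  - (ds (ds curv) t u - k * (psi3 t u) ^ 2) / (k ^ 2) * psi2 t u.
End Curve.

Definition gauss_curv (X : R -> R -> V3) (t u : R) : R :=
  let Xt := Dt X t u in
  let Xu := Du X t u in
  let n0 := cross Xt Xu in
  let n := vscal (/ vnorm n0) n0 in
  let E := dot Xt Xt in
  let F := dot Xt Xu in
  let G := dot Xu Xu in
  let L := dot (Dt (Dt X) t u) n in
  let M := dot (Du (Dt X) t u) n in
  let N := dot (Du (Du X) t u) n in
  (L * N - M * M) / (E * G - F * F).

(* Main.v *)
Require Import Defs.
From Stdlib Require Import Reals Lra Psatz FunctionalExtensionality.
From Stdlib Require Import Reals.
From Coquelicot Require Import Coquelicot.
Open Scope R_scope.

Definition openD (D : R -> R -> Prop) := forall t u, D t u -> locally_2d D t u.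

Lemma loc_of D P t u : openD D -> (forall a b, D a b -> P a b) -> D t u -> locally_2d P t u.
Proof. intros HD HP H. destruct (HD t u H) as [d Hd]. exists d. intros; apply HP, Hd; auto. Qed.

Lemma exd_plus (f g : R -> R) x : ex_derive f x -> ex_derive g x -> ex_derive (fun y => f y + g y) x.
Proof. intros; apply (@ex_derive_plus R_AbsRing R_NormedModule); auto. Qed.

Lemma Ck_S D k f : Ck D (S k) f -> Ck D k f.
Proof.
  revert f; induction k as [|k IH]; intros f H.
  - split; [apply H | exact I].
  - destruct H as [Hc [Ht [Hu [Hdt Hdu]]]]. repeat split; auto.
Qed.

Lemma Ck_sub D D' k f : (forall t u, D' t u -> D t u) -> Ck D k f -> Ck D' k f.
Proof.
  intros HS; revert f; induction k as [|k IH]; intros f H.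
  - split; [intros; apply H; auto | exact I].
  - destruct H as [Hc [Ht [Hu [Hdt Hdu]]]]. repeat split; auto.
Qed.

Lemma Ck_ext D k : openD D -> forall f g, (forall t u, D t u -> f t u = g t u) -> Ck D k f -> Ck D k g.
Proof.
  intros HD; induction k as [|k IH]; intros f g E H.
  - split; [|exact I]. intros t u Htu. apply continuity_2d_pt_ext_loc with f.
    + apply loc_of with D; auto.
    + apply H; auto.
  - destruct H as [Hc [Ht [Hu [Hdt Hdu]]]].
    assert (L : forall t u, D t u -> locally_2d (fun a b => f a b = g a b) t u)
      by (intros; apply loc_of with D; auto).
    split; [|split; [|split; [|split]]].
    + intros t u Htu. apply continuity_2d_pt_ext_loc with f; auto.
    + intros t u Htu. apply ex_derive_ext_loc with (fun t' => f t' u); auto.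
      apply (locally_2d_1d_const_y (fun a b => f a b = g a b)); auto.
    + intros t u Htu. apply ex_derive_ext_loc with (fun u' => f t u'); auto.
      apply (locally_2d_1d_const_x (fun a b => f a b = g a b)); auto.
    + apply IH with (dt f); auto. intros t u Htu. unfold dt. apply Derive_ext_loc.
      apply (locally_2d_1d_const_y (fun a b => f a b = g a b)); auto.
    + apply IH with (du f); auto. intros t u Htu. unfold du. apply Derive_ext_loc.
      apply (locally_2d_1d_const_x (fun a b => f a b = g a b)); auto.
Qed.

Lemma Ck_const D k : forall c, Ck D k (fun _ _ => c).
Proof.
  induction k as [|k IH]; intro c.
  - split; [intros; apply continuity_2d_pt_const | exact I].
  - split; [intros; apply continuity_2d_pt_const|].
    split; [intros; apply ex_derive_const|].
    split; [intros; apply ex_derive_const|].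
    assert (E : dt (fun _ _ => c) = fun _ _ => 0).
    { apply functional_extensionality; intro a; apply functional_extensionality; intro b.
      unfold dt; apply Derive_const. }
    assert (E' : du (fun _ _ => c) = fun _ _ => 0).
    { apply functional_extensionality; intro a; apply functional_extensionality; intro b.
      unfold du; apply Derive_const. }
    rewrite E, E'. auto.
Qed.

Section Clos.
Variable D : R -> R -> Prop.
Hypothesis HD : openD D.

Lemma Ck_plus k : forall f g, Ck D k f -> Ck D k g -> Ck D k (fun a b => f a b + g a b).
Proof.
  induction k as [|k IH]; intros f g Hf Hg.
  - split; [|exact I]. intros; apply continuity_2d_pt_plus; [apply Hf|apply Hg]; auto.
  - destruct Hf as [cf [tf [uf [dtf duf]]]]. destruct Hg as [cg [tg [ug [dtg dug]]]].
    split; [intros; apply continuity_2d_pt_plus; auto|].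
    split; [intros; apply exd_plus; auto|].
    split; [intros; apply exd_plus; auto|].
    split.
    + apply Ck_ext with (fun a b => dt f a b + dt g a b); auto.
      intros t u H. unfold dt. rewrite Derive_plus; auto.
    + apply Ck_ext with (fun a b => du f a b + du g a b); auto.
      intros t u H. unfold du. rewrite Derive_plus; auto.
Qed.

Lemma Ck_mult k : forall f g, Ck D k f -> Ck D k g -> Ck D k (fun a b => f a b * g a b).
Proof.
  induction k as [|k IH]; intros f g Hf Hg.
  - split; [|exact I]. intros; apply continuity_2d_pt_mult; [apply Hf|apply Hg]; auto.
  - pose proof (Ck_S _ _ _ Hf) as Hf'. pose proof (Ck_S _ _ _ Hg) as Hg'.
    destruct Hf as [cf [tf [uf [dtf duf]]]]. destruct Hg as [cg [tg [ug [dtg dug]]]].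
    split; [intros; apply continuity_2d_pt_mult; auto|].
    split; [intros; apply ex_derive_mult; auto|].
    split; [intros; apply ex_derive_mult; auto|].
    split.
    + apply Ck_ext with (fun a b => dt f a b * g a b + f a b * dt g a b); auto.
      * intros t u H. unfold dt. rewrite Derive_mult; auto.
      * apply Ck_plus; apply IH; auto.
    + apply Ck_ext with (fun a b => du f a b * g a b + f a b * du g a b); auto.
      * intros t u H. unfold du. rewrite Derive_mult; auto.
      * apply Ck_plus; apply IH; auto.
Qed.

Lemma Ck_inv k : forall f, Ck D k f -> (forall t u, D t u -> f t u <> 0) -> Ck D k (fun a b => / f a b).
Proof.
  induction k as [|k IH]; intros f Hf Hn.
  - split; [|exact I]. intros; apply continuity_2d_pt_inv; [apply Hf|apply Hn]; auto.
  - pose proof (Ck_S _ _ _ Hf) as Hf'.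
    destruct Hf as [cf [tf [uf [dtf duf]]]].
    split; [intros; apply continuity_2d_pt_inv; auto|].
    split; [intros; apply ex_derive_inv; auto|].
    split; [intros; apply ex_derive_inv; auto|].
    split.
    + apply Ck_ext with (fun a b => ((-1) * dt f a b) * (/ f a b * / f a b)); auto.
      * intros t u H. unfold dt. rewrite Derive_inv; auto. specialize (Hn t u H). field; auto.
      * apply Ck_mult; [apply Ck_mult; [apply Ck_const|auto]|apply Ck_mult; apply IH; auto].
    + apply Ck_ext with (fun a b => ((-1) * du f a b) * (/ f a b * / f a b)); auto.
      * intros t u H. unfold du. rewrite Derive_inv; auto. specialize (Hn t u H). change (Derive (f t) u) with (Derive (fun v => f t v) u); field; auto.
      * apply Ck_mult; [apply Ck_mult; [apply Ck_const|auto]|apply Ck_mult; apply IH; auto].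
Qed.

Lemma exd_sqrt (f : R -> R) x : ex_derive f x -> 0 < f x -> ex_derive (fun y => sqrt (f y)) x.
Proof. intros [l Hl] Hp. eexists. apply is_derive_sqrt; eauto. Qed.

Lemma Der_sqrt (f : R -> R) x : ex_derive f x -> 0 < f x ->
  Derive (fun y => sqrt (f y)) x = Derive f x * (/2 * / sqrt (f x)).
Proof. intros Hf Hp. apply is_derive_unique.
  replace (Derive f x * (/ 2 * / sqrt (f x))) with (Derive f x / (2 * sqrt (f x))).
  - apply is_derive_sqrt; auto. apply Derive_correct; auto.
  - unfold Rdiv; rewrite Rinv_mult; ring.
Qed.

Lemma Ck_sqrt k : forall f, Ck D k f -> (forall t u, D t u -> 0 < f t u) -> Ck D k (fun a b => sqrt (f a b)).
Proof.
  induction k as [|k IH]; intros f Hf Hn.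
  - split; [|exact I]. intros; apply continuity_1d_2d_pt_comp; [apply continuity_pt_sqrt; left; auto|apply Hf; auto].
  - pose proof (Ck_S _ _ _ Hf) as Hf'.
    destruct Hf as [cf [tf [uf [dtf duf]]]].
    split; [intros; apply continuity_1d_2d_pt_comp; [apply continuity_pt_sqrt; left; auto| auto]|].
    split; [intros; apply exd_sqrt; auto|].
    split; [intros; apply exd_sqrt; auto|].
    assert (Hs : Ck D k (fun a b => / 2 * / sqrt (f a b))).
    { apply Ck_mult; [apply Ck_const|]. apply Ck_inv; auto.
      intros t u H; specialize (Hn t u H). apply Rgt_not_eq, sqrt_lt_R0; auto. }
    split.
    + apply Ck_ext with (fun a b => dt f a b * (/2 * / sqrt (f a b))); auto.
      * intros t u H. unfold dt. rewrite Der_sqrt; auto.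
      * apply Ck_mult; auto.
    + apply Ck_ext with (fun a b => du f a b * (/2 * / sqrt (f a b))); auto.
      * intros t u H. unfold du. rewrite Der_sqrt; auto.
      * apply Ck_mult; auto.
Qed.

Lemma Der_sin (f : R -> R) x : ex_derive f x -> Derive (fun y => sin (f y)) x = cos (f x) * Derive f x.
Proof. intros Hf. apply is_derive_unique. rewrite Rmult_comm.
  apply (is_derive_comp sin f x (cos (f x))); [apply is_derive_sin | apply Derive_correct; auto]. Qed.
Lemma Der_cos (f : R -> R) x : ex_derive f x -> Derive (fun y => cos (f y)) x = -1 * sin (f x) * Derive f x.
Proof. intros Hf. apply is_derive_unique. replace (-1 * sin (f x) * Derive f x) with (Derive f x * - sin (f x)) by ring.
  apply (is_derive_comp cos f x (- sin (f x))); [apply is_derive_cos | apply Derive_correct; auto]. Qed.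
Lemma exd_sin (f : R -> R) x : ex_derive f x -> ex_derive (fun y => sin (f y)) x.
Proof. intros Hf. apply ex_derive_comp; auto. eexists; apply is_derive_sin. Qed.
Lemma exd_cos (f : R -> R) x : ex_derive f x -> ex_derive (fun y => cos (f y)) x.
Proof. intros Hf. apply ex_derive_comp; auto. eexists; apply is_derive_cos. Qed.

Lemma Ck_sincos k : forall f, Ck D k f -> Ck D k (fun a b => sin (f a b)) /\ Ck D k (fun a b => cos (f a b)).
Proof.
  induction k as [|k IH]; intros f Hf.
  - split; (split; [|exact I]); intros; apply continuity_1d_2d_pt_comp; try apply Hf; auto;
      [apply continuity_sin | apply continuity_cos].
  - pose proof (Ck_S _ _ _ Hf) as Hf'. destruct (IH f Hf') as [IHs IHc].
    destruct Hf as [cf [tf [uf [dtf duf]]]].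
    split.
    + split; [intros; apply continuity_1d_2d_pt_comp; [apply continuity_sin| auto]|].
      split; [intros; apply exd_sin; auto|].
      split; [intros; apply exd_sin; auto|].
      split.
      * apply Ck_ext with (fun a b => cos (f a b) * dt f a b); auto.
        -- intros t u H. unfold dt. rewrite Der_sin; auto.
        -- apply Ck_mult; auto.
      * apply Ck_ext with (fun a b => cos (f a b) * du f a b); auto.
        -- intros t u H. unfold du. rewrite Der_sin; auto.
        -- apply Ck_mult; auto.
    + split; [intros; apply continuity_1d_2d_pt_comp; [apply continuity_cos| auto]|].
      split; [intros; apply exd_cos; auto|].
      split; [intros; apply exd_cos; auto|].
      split.
      * apply Ck_ext with (fun a b => (-1 * sin (f a b)) * dt f a b); auto.
        -- intros t u H. unfold dt. rewrite Der_cos; auto.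
        -- apply Ck_mult; auto. apply Ck_mult; auto. apply Ck_const.
      * apply Ck_ext with (fun a b => (-1 * sin (f a b)) * du f a b); auto.
        -- intros t u H. unfold du. rewrite Der_cos; auto.
        -- apply Ck_mult; auto. apply Ck_mult; auto. apply Ck_const.
Qed.
End Clos.

Section Sm.
Variable D : R -> R -> Prop.
Hypothesis HD : openD D.

Lemma sm_const c : smooth_on D (fun _ _ => c).
Proof. intro k; apply Ck_const. Qed.
Lemma sm_plus f g : smooth_on D f -> smooth_on D g -> smooth_on D (fun a b => f a b + g a b).
Proof. intros Hf Hg k; apply Ck_plus; auto. Qed.
Lemma sm_mult f g : smooth_on D f -> smooth_on D g -> smooth_on D (fun a b => f a b * g a b).
Proof. intros Hf Hg k; apply Ck_mult; auto. Qed.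
Lemma sm_inv f : smooth_on D f -> (forall t u, D t u -> f t u <> 0) -> smooth_on D (fun a b => / f a b).
Proof. intros Hf Hn k; apply Ck_inv; auto. Qed.
Lemma sm_sqrt f : smooth_on D f -> (forall t u, D t u -> 0 < f t u) -> smooth_on D (fun a b => sqrt (f a b)).
Proof. intros Hf Hn k; apply Ck_sqrt; auto. Qed.
Lemma sm_sin f : smooth_on D f -> smooth_on D (fun a b => sin (f a b)).
Proof. intros Hf k; apply Ck_sincos; auto. Qed.
Lemma sm_cos f : smooth_on D f -> smooth_on D (fun a b => cos (f a b)).
Proof. intros Hf k; apply Ck_sincos; auto. Qed.
Lemma sm_ext f g : (forall t u, D t u -> f t u = g t u) -> smooth_on D f -> smooth_on D g.
Proof. intros E Hf k; apply Ck_ext with f; auto. Qed.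
Lemma sm_opp f : smooth_on D f -> smooth_on D (fun a b => - f a b).
Proof. intros Hf. apply sm_ext with (fun a b => (-1) * f a b). intros; ring.
  apply sm_mult; auto. apply sm_const. Qed.
Lemma sm_minus f g : smooth_on D f -> smooth_on D g -> smooth_on D (fun a b => f a b - g a b).
Proof. intros; apply sm_plus; auto. apply sm_opp; auto. Qed.
Lemma sm_dt f : smooth_on D f -> smooth_on D (dt f).
Proof. intros Hf k. apply (Hf (S k)). Qed.
Lemma sm_du f : smooth_on D f -> smooth_on D (du f).
Proof. intros Hf k. apply (Hf (S k)). Qed.
Lemma sm_ext_t f t u : smooth_on D f -> D t u -> ex_derive (fun t' => f t' u) t.
Proof. intros Hf H. destruct (Hf 1%nat) as [_ [Ht _]]. exact (Ht t u H). Qed.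
Lemma sm_ext_u f t u : smooth_on D f -> D t u -> ex_derive (fun u' => f t u') u.
Proof. intros Hf H. destruct (Hf 1%nat) as [_ [_ [Hu _]]]. exact (Hu t u H). Qed.
Lemma sm_cont f t u : smooth_on D f -> D t u -> continuity_2d_pt f t u.
Proof. intros Hf H. destruct (Hf 0%nat) as [Hc _]. exact (Hc t u H). Qed.

Lemma sm_schwarz f t u : smooth_on D f -> D t u -> dt (du f) t u = du (dt f) t u.
Proof.
  intros Hf H. unfold dt, du. apply Schwarz.
  - apply loc_of with D; auto. intros a b Hab. repeat split.
    + apply sm_ext_t; auto.
    + apply sm_ext_u; auto.
    + apply (sm_ext_t (du f)); auto. apply sm_du; auto.
    + apply (sm_ext_u (dt f)); auto. apply sm_dt; auto.
  - apply (sm_cont (dt (du f))); auto. apply sm_dt, sm_du; auto.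
  - apply (sm_cont (du (dt f))); auto. apply sm_du, sm_dt; auto.
Qed.

Lemma sm3_Du X : smooth_on3 D X -> smooth_on3 D (Du X).
Proof. intros [H1 [H2 H3]]. repeat split; apply sm_du; auto. Qed.
Lemma sm3_Dt X : smooth_on3 D X -> smooth_on3 D (Dt X).
Proof. intros [H1 [H2 H3]]. repeat split; apply sm_dt; auto. Qed.
Lemma sm3_vscal c X : smooth_on D c -> smooth_on3 D X -> smooth_on3 D (fun a b => vscal (c a b) (X a b)).
Proof. intros Hc [H1 [H2 H3]]. repeat split; apply sm_mult; auto. Qed.
Lemma sm3_vadd X Y : smooth_on3 D X -> smooth_on3 D Y -> smooth_on3 D (fun a b => vadd (X a b) (Y a b)).
Proof. intros [H1 [H2 H3]] [G1 [G2 G3]]. repeat split; apply sm_plus; auto. Qed.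
Lemma sm_dot X Y : smooth_on3 D X -> smooth_on3 D Y -> smooth_on D (fun a b => dot (X a b) (Y a b)).
Proof. intros [H1 [H2 H3]] [G1 [G2 G3]]. unfold dot.
  repeat apply sm_plus; apply sm_mult; auto. Qed.
Lemma sm3_cross X Y : smooth_on3 D X -> smooth_on3 D Y -> smooth_on3 D (fun a b => cross (X a b) (Y a b)).
Proof. intros [H1 [H2 H3]] [G1 [G2 G3]]. unfold cross.
  repeat split; simpl; apply sm_minus; apply sm_mult; auto. Qed.
End Sm.

Lemma sm_sub D D' f : (forall t u, D' t u -> D t u) -> smooth_on D f -> smooth_on D' f.
Proof. intros HS Hf k. apply Ck_sub with D; auto. Qed.
Lemma sm3_sub D D' X : (forall t u, D' t u -> D t u) -> smooth_on3 D X -> smooth_on3 D' X.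
Proof. intros HS [H1 [H2 H3]]. repeat split; apply sm_sub with D; auto. Qed.

Lemma open_pos D f : openD D -> (forall t u, D t u -> continuity_2d_pt f t u) ->
  openD (fun t u => D t u /\ 0 < f t u).
Proof.
  intros HD Hc t u [H Hp]. apply locally_2d_and; auto.
  destruct (Hc t u H (mkposreal _ Hp)) as [d Hd]. exists d. intros a b Ha Hb.
  specialize (Hd a b Ha Hb). simpl in Hd. apply Rabs_def2 in Hd. lra.
Qed.

Lemma open_strip a b : openD (fun t _ => a < t < b).
Proof.
  intros t u H. assert (Hp : 0 < Rmin (t - a) (b - t)) by (apply Rmin_pos; lra).
  exists (mkposreal _ Hp). intros x y Hx Hy. simpl in Hx.
  apply Rabs_def2 in Hx. pose proof (Rmin_l (t-a) (b-t)). pose proof (Rmin_r (t-a) (b-t)). lra.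
Qed.


Lemma V3_eq (a b : V3) : v1 a = v1 b -> v2 a = v2 b -> v3 a = v3 b -> a = b.
Proof. destruct a as [[a1 a2] a3], b as [[b1 b2] b3]; unfold v1, v2, v3; simpl; intros; subst; auto. Qed.

Ltac vsimpl := unfold dot, cross, vadd, vscal, mkV3, v1, v2, v3 in *; simpl in *.
Ltac vdestr := repeat match goal with v : V3 |- _ => destruct v as [[? ?] ?] end.

Lemma dot_comm a b : dot a b = dot b a.
Proof. vdestr; vsimpl; ring. Qed.
Lemma dot_addl a b c : dot (vadd a b) c = dot a c + dot b c.
Proof. vdestr; vsimpl; ring. Qed.
Lemma dot_scall s a c : dot (vscal s a) c = s * dot a c.
Proof. vdestr; vsimpl; ring. Qed.
Lemma dot_addr a b c : dot c (vadd a b) = dot c a + dot c b.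
Proof. vdestr; vsimpl; ring. Qed.
Lemma dot_scalr s a c : dot c (vscal s a) = s * dot c a.
Proof. vdestr; vsimpl; ring. Qed.
Lemma vscal_vscal s r a : vscal s (vscal r a) = vscal (s * r) a.
Proof. apply V3_eq; vsimpl; ring. Qed.
Lemma cross_scall s a b : cross (vscal s a) b = vscal s (cross a b).
Proof. apply V3_eq; vsimpl; ring. Qed.
Lemma cross_scalr s a b : cross a (vscal s b) = vscal s (cross a b).
Proof. apply V3_eq; vsimpl; ring. Qed.
Lemma lagrange a b : dot (cross a b) (cross a b) = dot a a * dot b b - dot a b * dot a b.
Proof. vdestr; vsimpl; ring. Qed.
Lemma triple a b c : dot (cross a b) c = dot a (cross b c).
Proof. vdestr; vsimpl; ring. Qed.
Lemma cross_self_dot a b : dot (cross a b) b = 0.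
Proof. vdestr; vsimpl; ring. Qed.
Lemma cross_self_dot' a b : dot (cross a b) a = 0.
Proof. vdestr; vsimpl; ring. Qed.

Lemma parseval T N v w : dot T T = 1 -> dot N N = 1 -> dot T N = 0 ->
  dot v w = dot v T * dot w T + dot v N * dot w N + dot v (cross T N) * dot w (cross T N).
Proof.
  intros H1 H2 H3.
  assert (E1 : v1 v * ((dot T T) * (dot N N) - dot T N * dot T N) =
     dot v (cross T N) * v1 (cross T N) + dot v N * (v1 N * dot T T - v1 T * dot T N)
       - dot v T * (v1 N * dot T N - v1 T * dot N N)).
  { vdestr; vsimpl; ring. }
  assert (E2 : v2 v * ((dot T T) * (dot N N) - dot T N * dot T N) =
     dot v (cross T N) * v2 (cross T N) + dot v N * (v2 N * dot T T - v2 T * dot T N)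
       - dot v T * (v2 N * dot T N - v2 T * dot N N)).
  { vdestr; vsimpl; ring. }
  assert (E3 : v3 v * ((dot T T) * (dot N N) - dot T N * dot T N) =
     dot v (cross T N) * v3 (cross T N) + dot v N * (v3 N * dot T T - v3 T * dot T N)
       - dot v T * (v3 N * dot T N - v3 T * dot N N)).
  { vdestr; vsimpl; ring. }
  rewrite H1, H2, H3 in E1, E2, E3.
  assert (Ev : v = vadd (vscal (dot v T) T) (vadd (vscal (dot v N) N) (vscal (dot v (cross T N)) (cross T N)))).
  { generalize (cross T N) E1 E2 E3. generalize (dot v T) (dot v N). intros a1 a2 c.
     generalize (dot v c). intros a3 F1 F2 F3. 
    apply V3_eq; unfold vadd, vscal, mkV3; cbn [v1 v2 v3 fst snd]; unfold v1, v2, v3 in *; lra. }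
  rewrite Ev at 1. rewrite !dot_addl, !dot_scall. rewrite !(dot_comm w). ring.
Qed.

Definition Dv (x : R -> V3) (z : R) : V3 :=
  mkV3 (Derive (fun y => v1 (x y)) z) (Derive (fun y => v2 (x y)) z) (Derive (fun y => v3 (x y)) z).
Definition exV (x : R -> V3) (z : R) : Prop :=
  ex_derive (fun y => v1 (x y)) z /\ ex_derive (fun y => v2 (x y)) z /\ ex_derive (fun y => v3 (x y)) z.

Ltac hyp := match goal with H : ?g |- ?g => exact H end.
Ltac vcb := cbv beta iota delta [Dv dot cross vadd vscal mkV3 v1 v2 v3 fst snd] in *.

Lemma Dv_vscal (c : R -> R) x z : ex_derive c z -> exV x z ->
  Dv (fun y => vscal (c y) (x y)) z = vadd (vscal (Derive c z) (x z)) (vscal (c z) (Dv x z)).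
Proof. intros Hc [H1 [H2 H3]]. apply V3_eq; unfold Dv; vcb; rewrite Derive_mult; try hyp; reflexivity. Qed.
Lemma Dv_vadd x w z : exV x z -> exV w z ->
  Dv (fun y => vadd (x y) (w y)) z = vadd (Dv x z) (Dv w z).
Proof. intros [H1 [H2 H3]] [G1 [G2 G3]]. apply V3_eq; unfold Dv; vcb; rewrite Derive_plus; try hyp; reflexivity. Qed.
Lemma exV_vscal (c : R -> R) x z : ex_derive c z -> exV x z -> exV (fun y => vscal (c y) (x y)) z.
Proof. intros Hc [H1 [H2 H3]]. repeat split; vcb; apply ex_derive_mult; hyp. Qed.
Lemma exV_vadd x w z : exV x z -> exV w z -> exV (fun y => vadd (x y) (w y)) z.
Proof. intros [H1 [H2 H3]] [G1 [G2 G3]]. repeat split; vcb; apply exd_plus; hyp. Qed.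
Lemma Der_sum3 (a b c d e f : R -> R) z : ex_derive a z -> ex_derive b z -> ex_derive c z ->
  ex_derive d z -> ex_derive e z -> ex_derive f z ->
  Derive (fun y => a y * b y + c y * d y + e y * f y) z =
  (Derive a z * b z + a z * Derive b z) + (Derive c z * d z + c z * Derive d z)
   + (Derive e z * f z + e z * Derive f z).
Proof.
  intros. rewrite Derive_plus.
  - rewrite Derive_plus by (apply ex_derive_mult; auto). rewrite !Derive_mult by auto. reflexivity.
  - apply exd_plus; apply ex_derive_mult; auto.
  - apply ex_derive_mult; auto.
Qed.
Lemma Der_dot x w z : exV x z -> exV w z ->
  Derive (fun y => dot (x y) (w y)) z = dot (Dv x z) (w z) + dot (x z) (Dv w z).
Proof.
  intros [H1 [H2 H3]] [G1 [G2 G3]]. unfold dot at 1.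
  pose proof (Der_sum3 (fun y => v1 (x y)) (fun y => v1 (w y)) (fun y => v2 (x y)) (fun y => v2 (w y))
     (fun y => v3 (x y)) (fun y => v3 (w y)) z H1 G1 H2 G2 H3 G3) as E.
  rewrite E. cbv beta. unfold dot, Dv, mkV3, v1, v2, v3. cbv beta iota delta [fst snd]. ring.
Qed.

Lemma exd_dot x w z : exV x z -> exV w z -> ex_derive (fun y => dot (x y) (w y)) z.
Proof. intros [H1 [H2 H3]] [G1 [G2 G3]]. unfold dot.
  apply exd_plus; [apply exd_plus|]. 
  - apply ex_derive_mult. exact H1. exact G1.
  - apply ex_derive_mult. exact H2. exact G2.
  - apply ex_derive_mult. exact H3. exact G3.
Qed.

Lemma sm3_exV_u D X t u : smooth_on3 D X -> D t u -> exV (fun u' => X t u') u.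
Proof. intros [H1 [H2 H3]] H. split; [|split]; [exact (sm_ext_u D (fun a b => v1 (X a b)) t u H1 H)|exact (sm_ext_u D (fun a b => v2 (X a b)) t u H2 H)|exact (sm_ext_u D (fun a b => v3 (X a b)) t u H3 H)]. Qed.
Lemma sm3_exV_t D X t u : smooth_on3 D X -> D t u -> exV (fun t' => X t' u) t.
Proof. intros [H1 [H2 H3]] H. split; [|split]; [exact (sm_ext_t D (fun a b => v1 (X a b)) t u H1 H)|exact (sm_ext_t D (fun a b => v2 (X a b)) t u H2 H)|exact (sm_ext_t D (fun a b => v3 (X a b)) t u H3 H)]. Qed.

Lemma Derive_right (f h : R -> R) x d : 0 < d -> ex_derive f x -> ex_derive h x ->
  (forall y, x <= y < x + d -> f y = h y) -> Derive f x = Derive h x.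
Proof.
  intros Hd Hf Hh E.
  assert (Hk : ex_derive (fun y => f y - h y) x).
  { apply exd_plus; auto. apply (@ex_derive_opp R_AbsRing R_NormedModule); auto. }
  assert (Z : Derive (fun y => f y - h y) x = 0).
  { pose proof (Derive_correct _ _ Hk) as P. apply is_derive_Reals in P.
    set (l := Derive (fun y => f y - h y) x) in *.
    destruct (Req_dec l 0) as [|Hl]; auto. exfalso.
    assert (He : 0 < Rabs l) by (apply Rabs_pos_lt; auto).
    destruct (P (Rabs l) He) as [del Hdel].
    set (e := Rmin (del/2) (d/2)).
    assert (He0 : 0 < e) by (apply Rmin_pos; [pose proof (cond_pos del)|]; lra).
    assert (He1 : e <= del/2) by apply Rmin_l. assert (He2 : e <= d/2) by apply Rmin_r.
    assert (Hne : e <> 0) by lra.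
    assert (Hlt : Rabs e < del) by (rewrite Rabs_pos_eq; [pose proof (cond_pos del)|]; lra).
    specialize (Hdel e Hne Hlt).
    rewrite (E (x + e)) in Hdel by lra. rewrite (E x) in Hdel by lra.
    assert (Hq : (h (x + e) - h (x + e) - (h x - h x)) / e = 0) by (field; auto).
    rewrite Hq in Hdel. change (Rabs (0 - l) < Rabs l) in Hdel.
    rewrite Rminus_0_l, Rabs_Ropp in Hdel. lra. }
  unfold Rminus in Z. rewrite Derive_plus in Z; auto.
  - rewrite Derive_opp in Z. lra.
  - apply (@ex_derive_opp R_AbsRing R_NormedModule); auto.
Qed.



Lemma sqrt_pos_inv x : 0 < sqrt x -> 0 < x.
Proof. intros H. destruct (Rle_or_lt x 0) as [Hx|Hx]; auto. rewrite sqrt_neg_0 in H; lra. Qed.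

Lemma vscal1 X : vscal 1 X = X.
Proof. apply V3_eq; unfold vscal, mkV3, v1, v2, v3; simpl; ring. Qed.

Lemma unit_scal c X : 0 < c -> c = sqrt (dot X X) -> dot (vscal (/c) X) (vscal (/c) X) = 1.
Proof. intros Hc E. rewrite dot_scall, dot_scalr.
  assert (0 <= dot X X) by (unfold dot; nra).
  assert (Ec : c * c = dot X X) by (rewrite E; apply sqrt_sqrt; auto).
  rewrite <- Ec. field. lra. Qed.

Lemma Du_vscal2 D c X t u : smooth_on D c -> smooth_on3 D X -> D t u ->
  Du (fun a b => vscal (c a b) (X a b)) t u = vadd (vscal (du c t u) (X t u)) (vscal (c t u) (Du X t u)).
Proof. intros Hc HX H. exact (Dv_vscal (fun y => c t y) (fun y => X t y) u (sm_ext_u D c t u Hc H) (sm3_exV_u D X t u HX H)). Qed.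
Lemma Dt_vscal2 D c X t u : smooth_on D c -> smooth_on3 D X -> D t u ->
  Dt (fun a b => vscal (c a b) (X a b)) t u = vadd (vscal (dt c t u) (X t u)) (vscal (c t u) (Dt X t u)).
Proof. intros Hc HX H. exact (Dv_vscal (fun y => c y u) (fun y => X y u) t (sm_ext_t D c t u Hc H) (sm3_exV_t D X t u HX H)). Qed.
Lemma Du_vadd2 D X Y t u : smooth_on3 D X -> smooth_on3 D Y -> D t u ->
  Du (fun a b => vadd (X a b) (Y a b)) t u = vadd (Du X t u) (Du Y t u).
Proof. intros HX HY H. exact (Dv_vadd (fun y => X t y) (fun y => Y t y) u (sm3_exV_u D X t u HX H) (sm3_exV_u D Y t u HY H)). Qed.
Lemma Dt_vadd2 D X Y t u : smooth_on3 D X -> smooth_on3 D Y -> D t u ->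
  Dt (fun a b => vadd (X a b) (Y a b)) t u = vadd (Dt X t u) (Dt Y t u).
Proof. intros HX HY H. exact (Dv_vadd (fun y => X y u) (fun y => Y y u) t (sm3_exV_t D X t u HX H) (sm3_exV_t D Y t u HY H)). Qed.
Lemma du_dot2 D X Y t u : smooth_on3 D X -> smooth_on3 D Y -> D t u ->
  du (fun a b => dot (X a b) (Y a b)) t u = dot (Du X t u) (Y t u) + dot (X t u) (Du Y t u).
Proof. intros HX HY H. exact (Der_dot (fun y => X t y) (fun y => Y t y) u (sm3_exV_u D X t u HX H) (sm3_exV_u D Y t u HY H)). Qed.
Lemma du_cos D f t u : smooth_on D f -> D t u -> du (fun a b => cos (f a b)) t u = -1 * sin (f t u) * du f t u.
Proof. intros Hf H. exact (Der_cos (fun y => f t y) u (sm_ext_u D f t u Hf H)). Qed.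
Lemma du_sin D f t u : smooth_on D f -> D t u -> du (fun a b => sin (f a b)) t u = cos (f t u) * du f t u.
Proof. intros Hf H. exact (Der_sin (fun y => f t y) u (sm_ext_u D f t u Hf H)). Qed.
Lemma dt_cos D f t u : smooth_on D f -> D t u -> dt (fun a b => cos (f a b)) t u = -1 * sin (f t u) * dt f t u.
Proof. intros Hf H. exact (Der_cos (fun y => f y u) t (sm_ext_t D f t u Hf H)). Qed.
Lemma dt_sin D f t u : smooth_on D f -> D t u -> dt (fun a b => sin (f a b)) t u = cos (f t u) * dt f t u.
Proof. intros Hf H. exact (Der_sin (fun y => f y u) t (sm_ext_t D f t u Hf H)). Qed.

Lemma nu_alg N B N' B' c s th' : dot N N = 1 -> dot B B = 1 -> dot N B = 0 -> dot N' N = 0 ->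
  dot B' B = 0 -> dot B' N = - dot N' B ->
  dot (vadd (vadd (vscal (-1 * s * th') N) (vscal c N')) (vadd (vscal (c * th') B) (vscal s B'))) N = - s * (th' + dot N' B) /\
  dot (vadd (vadd (vscal (-1 * s * th') N) (vscal c N')) (vadd (vscal (c * th') B) (vscal s B'))) B = c * (th' + dot N' B).
Proof.
  intros H1 H2 H3 H4 H5 H6. rewrite !dot_addl, !dot_scall. rewrite (dot_comm B N), H3, H1, H2, H4, H5, H6.
  split; ring.
Qed.

Section Frame.
Variables (gam : R -> R -> V3) (th : R -> R -> R) (D : R -> R -> Prop).
Hypothesis HD : openD D.
Hypothesis Hgam : smooth_on3 D gam.
Hypothesis Hth : smooth_on D th.
Hypothesis Hg : forall t u, D t u -> 0 < gspeed gam t u.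
Hypothesis Hk : forall t u, D t u -> 0 < curv gam t u.

Lemma s_g : smooth_on D (gspeed gam).
Proof.
  exact (sm_sqrt D HD _ (sm_dot D HD _ _ (sm3_Du D _ Hgam) (sm3_Du D _ Hgam))
           (fun t u H => sqrt_pos_inv _ (Hg t u H))).
Qed.
Lemma s_ginv : smooth_on D (fun a b => / gspeed gam a b).
Proof. apply sm_inv; auto. apply s_g. intros t u H; specialize (Hg t u H); lra. Qed.
Lemma s_Ds X : smooth_on3 D X -> smooth_on3 D (Ds gam X).
Proof. intros HX. exact (sm3_vscal D HD _ _ s_ginv (sm3_Du D _ HX)). Qed.
Lemma s_ds f : smooth_on D f -> smooth_on D (ds gam f).
Proof. intros Hf. exact (sm_mult D HD _ _ (sm_du D f Hf) s_ginv). Qed.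
Lemma s_T : smooth_on3 D (Tan gam).
Proof. exact (s_Ds gam Hgam). Qed.
Lemma s_DsT : smooth_on3 D (Ds gam (Tan gam)).
Proof. exact (s_Ds _ s_T). Qed.
Set Default Proof Using "All".
Lemma s_k : smooth_on D (curv gam).
Proof.
  exact (sm_sqrt D HD _ (sm_dot D HD _ _ s_DsT s_DsT)
           (fun t u H => sqrt_pos_inv _ (Hk t u H))).
Qed.
Lemma s_N : smooth_on3 D (Nor gam).
Proof.
  apply (sm3_vscal D HD (fun a b => / curv gam a b)); [|exact s_DsT].
  apply sm_inv; auto. apply s_k. intros t u H; specialize (Hk t u H); lra.
Qed.
Lemma s_B : smooth_on3 D (Bin gam).
Proof. exact (sm3_cross D HD _ _ s_T s_N). Qed.
Lemma s_tau : smooth_on D (tors gam).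
Proof. exact (sm_dot D HD _ _ (s_Ds _ s_N) s_B). Qed.
Lemma s_psi3 : smooth_on D (psi3 gam th).
Proof. exact (sm_plus D HD _ _ s_tau (s_ds _ Hth)). Qed.
Lemma s_cos : smooth_on D (fun a b => cos (th a b)).
Proof. exact (sm_cos D HD _ Hth). Qed.
Lemma s_sin : smooth_on D (fun a b => sin (th a b)).
Proof. exact (sm_sin D HD _ Hth). Qed.
Lemma s_nu : smooth_on3 D (nu_th gam th).
Proof. exact (sm3_vadd D HD _ _ (sm3_vscal D HD _ _ s_cos s_N) (sm3_vscal D HD _ _ s_sin s_B)). Qed.

Section Pt.
Variables t u : R.
Hypothesis Htu : D t u.

Lemma F_Du : Du gam t u = vscal (gspeed gam t u) (Tan gam t u).
Proof.
  unfold Tan, Ds. rewrite vscal_vscal. rewrite Rinv_r; [symmetry; apply vscal1|].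
  specialize (Hg t u Htu); lra.
Qed.
Lemma F_TT : dot (Tan gam t u) (Tan gam t u) = 1.
Proof. unfold Tan, Ds. apply unit_scal; auto. Qed.
Lemma F_DsT : Ds gam (Tan gam) t u = vscal (curv gam t u) (Nor gam t u).
Proof.
  unfold Nor. rewrite vscal_vscal. rewrite Rinv_r; [symmetry; apply vscal1|].
  specialize (Hk t u Htu); lra.
Qed.
Lemma F_DuT : Du (Tan gam) t u = vscal (gspeed gam t u * curv gam t u) (Nor gam t u).
Proof.
  rewrite <- vscal_vscal, <- F_DsT. unfold Ds at 1. rewrite vscal_vscal.
  rewrite Rinv_r; [symmetry; apply vscal1|]. specialize (Hg t u Htu); lra.
Qed.
Lemma F_NN : dot (Nor gam t u) (Nor gam t u) = 1.
Proof. unfold Nor. apply unit_scal; auto. Qed.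
End Pt.

Lemma const_dot_u X Y c t u : smooth_on3 D X -> smooth_on3 D Y ->
  (forall a b, D a b -> dot (X a b) (Y a b) = c) -> D t u ->
  dot (Du X t u) (Y t u) + dot (X t u) (Du Y t u) = 0.
Proof.
  intros HX HY E H.
  pose proof (Der_dot (fun u' => X t u') (fun u' => Y t u') u (sm3_exV_u D X t u HX H) (sm3_exV_u D Y t u HY H)) as P.
  change (Dv (fun u' => X t u') u) with (Du X t u) in P.
  change (Dv (fun u' => Y t u') u) with (Du Y t u) in P.
  rewrite <- P. rewrite (Derive_ext_loc _ (fun _ => c)). apply Derive_const.
  apply (locally_2d_1d_const_x (fun a b => dot (X a b) (Y a b) = c)).
  apply loc_of with D; auto.
Qed.
Lemma const_dot_t X Y c t u : smooth_on3 D X -> smooth_on3 D Y ->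
  (forall a b, D a b -> dot (X a b) (Y a b) = c) -> D t u ->
  dot (Dt X t u) (Y t u) + dot (X t u) (Dt Y t u) = 0.
Proof.
  intros HX HY E H.
  pose proof (Der_dot (fun t' => X t' u) (fun t' => Y t' u) t (sm3_exV_t D X t u HX H) (sm3_exV_t D Y t u HY H)) as P.
  change (Dv (fun t' => X t' u) t) with (Dt X t u) in P.
  change (Dv (fun t' => Y t' u) t) with (Dt Y t u) in P.
  rewrite <- P. rewrite (Derive_ext_loc _ (fun _ => c)). apply Derive_const.
  apply (locally_2d_1d_const_y (fun a b => dot (X a b) (Y a b) = c)).
  apply loc_of with D; auto.
Qed.

Section Pt2.
Variables t u : R.
Hypothesis Htu : D t u.

Lemma F_TN : dot (Tan gam t u) (Nor gam t u) = 0.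
Proof.
  pose proof (const_dot_u _ _ 1 t u s_T s_T F_TT Htu) as P.
  rewrite F_DuT in P by auto. rewrite dot_scall, dot_scalr, (dot_comm (Nor gam t u)) in P.
  specialize (Hg t u Htu). specialize (Hk t u Htu).
  assert (Hp : 0 < gspeed gam t u * curv gam t u) by (apply Rmult_lt_0_compat; auto).
  nra.
Qed.
Lemma F_BB : dot (Bin gam t u) (Bin gam t u) = 1.
Proof. unfold Bin. rewrite lagrange, F_TT, F_NN, F_TN by auto. ring. Qed.
Lemma F_TB : dot (Tan gam t u) (Bin gam t u) = 0.
Proof. unfold Bin. rewrite dot_comm. apply cross_self_dot'. Qed.
Lemma F_NB : dot (Nor gam t u) (Bin gam t u) = 0.
Proof. unfold Bin. rewrite dot_comm. apply cross_self_dot. Qed.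
Lemma F_pars v w : dot v w = dot v (Tan gam t u) * dot w (Tan gam t u) + dot v (Nor gam t u) * dot w (Nor gam t u)
   + dot v (Bin gam t u) * dot w (Bin gam t u).
Proof. unfold Bin. apply parseval; [apply F_TT|apply F_NN|apply F_TN]; auto. Qed.
End Pt2.
Lemma F_BN a b : D a b -> dot (Bin gam a b) (Nor gam a b) = 0.
Proof. intros H. rewrite dot_comm. apply F_NB; auto. Qed.
Lemma F_BT a b : D a b -> dot (Bin gam a b) (Tan gam a b) = 0.
Proof. intros H. rewrite dot_comm. apply F_TB; auto. Qed.
Section Pt3.
Variables t u : R.
Hypothesis Htu : D t u.

Lemma dNN_u : dot (Du (Nor gam) t u) (Nor gam t u) = 0.
Proof. pose proof (const_dot_u _ _ 1 t u s_N s_N F_NN Htu) as P. rewrite (dot_comm (Nor gam t u)) in P. lra. Qed.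
Lemma dNN_t : dot (Dt (Nor gam) t u) (Nor gam t u) = 0.
Proof. pose proof (const_dot_t _ _ 1 t u s_N s_N F_NN Htu) as P. rewrite (dot_comm (Nor gam t u)) in P. lra. Qed.
Lemma dBB_u : dot (Du (Bin gam) t u) (Bin gam t u) = 0.
Proof. pose proof (const_dot_u _ _ 1 t u s_B s_B F_BB Htu) as P. rewrite (dot_comm (Bin gam t u)) in P. lra. Qed.
Lemma dBB_t : dot (Dt (Bin gam) t u) (Bin gam t u) = 0.
Proof. pose proof (const_dot_t _ _ 1 t u s_B s_B F_BB Htu) as P. rewrite (dot_comm (Bin gam t u)) in P. lra. Qed.
Lemma dBN_u : dot (Du (Bin gam) t u) (Nor gam t u) = - dot (Du (Nor gam) t u) (Bin gam t u).
Proof. pose proof (const_dot_u _ _ 0 t u s_B s_N F_BN Htu) as P. rewrite (dot_comm (Bin gam t u)) in P. lra. Qed.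
Lemma dBN_t : dot (Dt (Bin gam) t u) (Nor gam t u) = - dot (Dt (Nor gam) t u) (Bin gam t u).
Proof. pose proof (const_dot_t _ _ 0 t u s_B s_N F_BN Htu) as P. rewrite (dot_comm (Bin gam t u)) in P. lra. Qed.
Lemma dBT_u : dot (Du (Bin gam) t u) (Tan gam t u) = 0.
Proof. pose proof (const_dot_u _ _ 0 t u s_B s_T F_BT Htu) as P.
  rewrite F_DuT, dot_scalr, F_BN in P by auto. lra. Qed.
Lemma tau_eq : tors gam t u = / gspeed gam t u * dot (Du (Nor gam) t u) (Bin gam t u).
Proof. unfold tors, Ds. rewrite dot_scall. reflexivity. Qed.
Lemma Dnu_u : Du (nu_th gam th) t u =
  vadd (vadd (vscal (-1 * sin (th t u) * du th t u) (Nor gam t u)) (vscal (cos (th t u)) (Du (Nor gam) t u)))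
       (vadd (vscal (cos (th t u) * du th t u) (Bin gam t u)) (vscal (sin (th t u)) (Du (Bin gam) t u))).
Proof.
  unfold nu_th. rewrite (Du_vadd2 D) by (auto; apply sm3_vscal; auto using s_cos, s_sin, s_N, s_B).
  rewrite (Du_vscal2 D) by (auto using s_cos, s_N). rewrite (Du_vscal2 D) by (auto using s_sin, s_B).
  rewrite (du_cos D), (du_sin D) by auto. reflexivity.
Qed.
Lemma Dnu_t : Dt (nu_th gam th) t u =
  vadd (vadd (vscal (-1 * sin (th t u) * dt th t u) (Nor gam t u)) (vscal (cos (th t u)) (Dt (Nor gam) t u)))
       (vadd (vscal (cos (th t u) * dt th t u) (Bin gam t u)) (vscal (sin (th t u)) (Dt (Bin gam) t u))).
Proof.
  unfold nu_th. rewrite (Dt_vadd2 D) by (auto; apply sm3_vscal; auto using s_cos, s_sin, s_N, s_B).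
  rewrite (Dt_vscal2 D) by (auto using s_cos, s_N). rewrite (Dt_vscal2 D) by (auto using s_sin, s_B).
  rewrite (dt_cos D), (dt_sin D) by auto. reflexivity.
Qed.
End Pt3.

End Frame.



Lemma du_plus2 D f h t u : smooth_on D f -> smooth_on D h -> D t u ->
  du (fun a b => f a b + h a b) t u = du f t u + du h t u.
Proof. intros Hf Hh H. exact (Derive_plus (fun y => f t y) (fun y => h t y) u (sm_ext_u D f t u Hf H) (sm_ext_u D h t u Hh H)). Qed.
Lemma du_mult2 D f h t u : smooth_on D f -> smooth_on D h -> D t u ->
  du (fun a b => f a b * h a b) t u = du f t u * h t u + f t u * du h t u.
Proof. intros Hf Hh H. exact (Derive_mult (fun y => f t y) (fun y => h t y) u (sm_ext_u D f t u Hf H) (sm_ext_u D h t u Hh H)). Qed.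
Lemma sm3_schwarz D X t u : openD D -> smooth_on3 D X -> D t u -> Dt (Du X) t u = Du (Dt X) t u.
Proof. intros HD [H1 [H2 H3]] H. apply V3_eq.
  - exact (sm_schwarz D HD (fun a b => v1 (X a b)) t u H1 H).
  - exact (sm_schwarz D HD (fun a b => v2 (X a b)) t u H2 H).
  - exact (sm_schwarz D HD (fun a b => v3 (X a b)) t u H3 H).
Qed.
Lemma Dt_right D1 D2 X Y t u d : smooth_on3 D1 X -> smooth_on3 D2 Y -> D1 t u -> D2 t u -> 0 < d ->
  (forall y, t <= y < t + d -> X y u = Y y u) -> Dt X t u = Dt Y t u.
Proof. intros [H1 [H2 H3]] [G1 [G2 G3]] HX HY Hd E. apply V3_eq.
  - change (Derive (fun y => v1 (X y u)) t = Derive (fun y => v1 (Y y u)) t).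
    apply Derive_right with d; auto.
    + exact (sm_ext_t D1 (fun a b => v1 (X a b)) t u H1 HX).
    + exact (sm_ext_t D2 (fun a b => v1 (Y a b)) t u G1 HY).
    + intros y Hy; rewrite E; auto.
  - change (Derive (fun y => v2 (X y u)) t = Derive (fun y => v2 (Y y u)) t).
    apply Derive_right with d; auto.
    + exact (sm_ext_t D1 (fun a b => v2 (X a b)) t u H2 HX).
    + exact (sm_ext_t D2 (fun a b => v2 (Y a b)) t u G2 HY).
    + intros y Hy; rewrite E; auto.
  - change (Derive (fun y => v3 (X y u)) t = Derive (fun y => v3 (Y y u)) t).
    apply Derive_right with d; auto.
    + exact (sm_ext_t D1 (fun a b => v3 (X a b)) t u H3 HX).
    + exact (sm_ext_t D2 (fun a b => v3 (Y a b)) t u G3 HY).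
    + intros y Hy; rewrite E; auto.
Qed.

Lemma cross_cross a b : cross a (cross a b) = vadd (vscal (dot a b) a) (vscal (- dot a a) b).
Proof. apply V3_eq; unfold cross, dot, vadd, vscal, mkV3, v1, v2, v3; simpl; ring. Qed.

Lemma norm_unit k g X : 0 < k -> 0 < g -> dot X X = 1 ->
  vscal (/ vnorm (vscal k (vscal g X))) (vscal k (vscal g X)) = X.
Proof.
  intros Hk Hg HX. rewrite !vscal_vscal. unfold vnorm. rewrite dot_scall, dot_scalr, HX.
  replace (k * g * (k * g * 1)) with (Rsqr (k * g)) by (unfold Rsqr; ring).
  rewrite sqrt_Rsqr by (apply Rmult_le_pos; lra).
  replace (/ (k * g) * k * g) with 1 by (field; lra). apply vscal1.
Qed.

Section Main.
Variables (K tbar a : R) (gam : R -> R -> V3) (th : R -> R -> R).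
Hypothesis Ha : a < 0.
Hypothesis Hsg : smooth_on3 (fun t _ => a < t < tbar) gam.
Hypothesis Hsth : smooth_on (fun t _ => a < t < tbar) th.
Hypothesis Hreg : forall t u, 0 <= t < tbar ->
     0 < gspeed gam t u /\ 0 < curv gam t u /\ psi2 gam th t u <> 0.
Hypothesis Hflow : forall t u, 0 <= t < tbar ->
     Dt gam t u = vscal (curv gam t u) (nu_th gam th t u) /\
     dt th t u = upsilon gam th K t u.

Definition S0 : R -> R -> Prop := fun t _ => a < t < tbar.
Definition U1 t u := S0 t u /\ 0 < dot (Du gam t u) (Du gam t u).
Lemma HS0 : openD S0. Proof. apply open_strip. Qed.
Lemma HU1 : openD U1.
Proof. apply open_pos. apply HS0. intros t u H. apply (sm_cont S0); auto.
  apply sm_dot; [apply HS0| |]; apply sm3_Du; exact Hsg. Qed.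
Lemma Hg1 t u : U1 t u -> 0 < gspeed gam t u.
Proof. intros [_ H]. unfold gspeed, vnorm. apply sqrt_lt_R0; auto. Qed.
Lemma Hgam1 : smooth_on3 U1 gam.
Proof. apply sm3_sub with S0; [intros t u []; auto | exact Hsg]. Qed.
Definition U t u := U1 t u /\ 0 < dot (Ds gam (Tan gam) t u) (Ds gam (Tan gam) t u).
Lemma HU : openD U.
Proof. apply open_pos. apply HU1. intros t u H. apply (sm_cont U1); auto.
  apply sm_dot; [apply HU1| |]; apply (s_DsT gam U1 HU1 Hgam1 Hg1). Qed.
Lemma HgU t u : U t u -> 0 < gspeed gam t u.
Proof. intros [H _]. apply Hg1; auto. Qed.
Lemma HkU t u : U t u -> 0 < curv gam t u.
Proof. intros [_ H]. unfold curv, vnorm. apply sqrt_lt_R0; auto. Qed.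
Lemma HgamU : smooth_on3 U gam.
Proof. apply sm3_sub with S0; [intros t u [[]]; auto | exact Hsg]. Qed.
Lemma HthU : smooth_on U th.
Proof. apply sm_sub with S0; [intros t u [[]]; auto | exact Hsth]. Qed.

Local Notation FR L := (L gam th U HU HgamU HthU HgU HkU).

Variable t0 : R.
Hypothesis Ht0 : 0 <= t0 < tbar.

Lemma Hline u : U t0 u.
Proof.
  destruct (Hreg t0 u Ht0) as [H1 [H2 _]].
  split; [split|].
  - unfold S0; lra.
  - apply sqrt_pos_inv. exact H1.
  - apply sqrt_pos_inv. exact H2.
Qed.


Lemma L1 u : Dt gam t0 u = vscal (curv gam t0 u) (nu_th gam th t0 u).
Proof. apply Hflow; auto. Qed.

Lemma nuN u : dot (nu_th gam th t0 u) (Nor gam t0 u) = cos (th t0 u).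
Proof. unfold nu_th. rewrite dot_addl, !dot_scall, (FR F_NN t0 u (Hline u)), (FR F_BN t0 u (Hline u)). ring. Qed.
Lemma nuB u : dot (nu_th gam th t0 u) (Bin gam t0 u) = sin (th t0 u).
Proof. unfold nu_th. rewrite dot_addl, !dot_scall, (FR F_NB t0 u (Hline u)), (FR F_BB t0 u (Hline u)). ring. Qed.
Lemma nuT u : dot (nu_th gam th t0 u) (Tan gam t0 u) = 0.
Proof. unfold nu_th. rewrite dot_addl, !dot_scall, (dot_comm (Nor gam t0 u)), (FR F_TN t0 u (Hline u)), (FR F_BT t0 u (Hline u)). ring. Qed.
Lemma nunu u : dot (nu_th gam th t0 u) (nu_th gam th t0 u) = 1.
Proof. unfold nu_th at 2. rewrite dot_addr, !dot_scalr.
  rewrite nuN, nuB. rewrite <- (sin2_cos2 (th t0 u)). unfold Rsqr. ring. Qed.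

Lemma L2 u : Du (Dt gam) t0 u = vadd (vscal (du (curv gam) t0 u) (nu_th gam th t0 u)) (vscal (curv gam t0 u) (Du (nu_th gam th) t0 u)).
Proof.
  change (Du (Dt gam) t0 u) with (Dv (fun y => Dt gam t0 y) u).
  rewrite (functional_extensionality (fun y => Dt gam t0 y) (fun y => vscal (curv gam t0 y) (nu_th gam th t0 y)) L1).
  exact (Du_vscal2 U (curv gam) (nu_th gam th) t0 u (FR s_k) (FR s_nu) (Hline u)).
Qed.

Lemma DuNB u : dot (Du (Nor gam) t0 u) (Bin gam t0 u) = gspeed gam t0 u * tors gam t0 u.
Proof. rewrite (FR tau_eq t0 u (Hline u)). pose proof (HgU t0 u (Hline u)). field. lra. Qed.

Lemma Dunu u : dot (Du (nu_th gam th) t0 u) (Nor gam t0 u) = - sin (th t0 u) * (du th t0 u + dot (Du (Nor gam) t0 u) (Bin gam t0 u)) /\ dot (Du (nu_th gam th) t0 u) (Bin gam t0 u) = cos (th t0 u) * (du th t0 u + dot (Du (Nor gam) t0 u) (Bin gam t0 u)).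
Proof.
  rewrite (FR Dnu_u t0 u (Hline u)). apply nu_alg.
  - exact (FR F_NN t0 u (Hline u)).
  - exact (FR F_BB t0 u (Hline u)).
  - exact (FR F_NB t0 u (Hline u)).
  - exact (FR dNN_u t0 u (Hline u)).
  - exact (FR dBB_u t0 u (Hline u)).
  - exact (FR dBN_u t0 u (Hline u)).
Qed.

Lemma L5B u : dot (Du (Dt gam) t0 u) (Bin gam t0 u) =
  du (curv gam) t0 u * sin (th t0 u) + curv gam t0 u * (cos (th t0 u) * (du th t0 u + gspeed gam t0 u * tors gam t0 u)).
Proof. rewrite L2, dot_addl, !dot_scall, nuB. destruct (Dunu u) as [_ E]. rewrite E, DuNB. ring. Qed.
Lemma L5N u : dot (Du (Dt gam) t0 u) (Nor gam t0 u) =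
  du (curv gam) t0 u * cos (th t0 u) + curv gam t0 u * (- sin (th t0 u) * (du th t0 u + gspeed gam t0 u * tors gam t0 u)).
Proof. rewrite L2, dot_addl, !dot_scall, nuN. destruct (Dunu u) as [E _]. rewrite E, DuNB. ring. Qed.

Lemma DtT_exp u : Dt (Tan gam) t0 u = vadd (vscal (dt (fun a b => / gspeed gam a b) t0 u) (Du gam t0 u))
   (vscal (/ gspeed gam t0 u) (Du (Dt gam) t0 u)).
Proof.
  change (Dt (Tan gam) t0 u) with (Dt (fun a b => vscal (/ gspeed gam a b) (Du gam a b)) t0 u).
  rewrite (Dt_vscal2 U (fun a b => / gspeed gam a b) (Du gam) t0 u (s_ginv gam U HU HgamU HgU) (sm3_Du U gam HgamU) (Hline u)).
  rewrite (sm3_schwarz U gam t0 u HU HgamU (Hline u)). reflexivity.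
Qed.

Lemma L7B u : dot (Dt (Tan gam) t0 u) (Bin gam t0 u) =
  ds gam (curv gam) t0 u * sin (th t0 u) + curv gam t0 u * cos (th t0 u) * psi3 gam th t0 u.
Proof.
  rewrite DtT_exp, dot_addl, !dot_scall, L5B.
  rewrite (FR F_Du t0 u (Hline u)), dot_scall, (FR F_TB t0 u (Hline u)).
  unfold psi3, ds. pose proof (HgU t0 u (Hline u)). field. lra.
Qed.
Lemma L7N u : dot (Dt (Tan gam) t0 u) (Nor gam t0 u) =
  ds gam (curv gam) t0 u * cos (th t0 u) - curv gam t0 u * sin (th t0 u) * psi3 gam th t0 u.
Proof.
  rewrite DtT_exp, dot_addl, !dot_scall, L5N.
  rewrite (FR F_Du t0 u (Hline u)), dot_scall, (FR F_TN t0 u (Hline u)).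
  unfold psi3, ds. pose proof (HgU t0 u (Hline u)). field. lra.
Qed.

Lemma smK : smooth_on U (curv gam). Proof. exact (FR s_k). Qed.
Lemma smA : smooth_on U (ds gam (curv gam)). Proof. exact (s_ds gam U HU HgamU HgU _ smK). Qed.
Lemma smS : smooth_on U (fun a b => sin (th a b)). Proof. exact (FR s_sin). Qed.
Lemma smC : smooth_on U (fun a b => cos (th a b)). Proof. exact (FR s_cos). Qed.
Lemma smP : smooth_on U (psi3 gam th). Proof. exact (FR s_psi3). Qed.

Lemma du_eq f u : du f t0 u = gspeed gam t0 u * ds gam f t0 u.
Proof. unfold ds. pose proof (HgU t0 u (Hline u)). field. lra. Qed.

Definition qf a b := ds gam (curv gam) a b * sin (th a b) + curv gam a b * cos (th a b) * psi3 gam th a b.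

Lemma q_der u : du qf t0 u =
  gspeed gam t0 u * ds gam (ds gam (curv gam)) t0 u * sin (th t0 u)
  + ds gam (curv gam) t0 u * (cos (th t0 u) * (gspeed gam t0 u * ds gam th t0 u))
  + ((gspeed gam t0 u * ds gam (curv gam) t0 u * cos (th t0 u)
      + curv gam t0 u * (-1 * sin (th t0 u) * (gspeed gam t0 u * ds gam th t0 u))) * psi3 gam th t0 u
     + curv gam t0 u * cos (th t0 u) * (gspeed gam t0 u * ds gam (psi3 gam th) t0 u)).
Proof.
  pose proof (Hline u) as H.
  unfold qf.
  rewrite (du_plus2 U (fun a b => ds gam (curv gam) a b * sin (th a b))
                     (fun a b => curv gam a b * cos (th a b) * psi3 gam th a b) t0 u).
  2: exact (sm_mult U HU _ _ smA smS).
  2: exact (sm_mult U HU _ _ (sm_mult U HU _ _ smK smC) smP).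
  2: exact H.
  rewrite (du_mult2 U (ds gam (curv gam)) (fun a b => sin (th a b)) t0 u smA smS H).
  rewrite (du_mult2 U (fun a b => curv gam a b * cos (th a b)) (psi3 gam th) t0 u (sm_mult U HU _ _ smK smC) smP H).
  rewrite (du_mult2 U (curv gam) (fun a b => cos (th a b)) t0 u smK smC H).
  rewrite (du_sin U th t0 u HthU H), (du_cos U th t0 u HthU H).
  rewrite (du_eq (ds gam (curv gam))), (du_eq (curv gam)), (du_eq th), (du_eq (psi3 gam th)).
  ring.
Qed.

Lemma smT : smooth_on3 U (Tan gam). Proof. exact (s_T gam U HU HgamU HgU). Qed.
Lemma smB : smooth_on3 U (Bin gam). Proof. exact (FR s_B). Qed.
Lemma smDsT : smooth_on3 U (Ds gam (Tan gam)). Proof. exact (s_DsT gam U HU HgamU HgU). Qed.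
Lemma smKinv : smooth_on U (fun a b => / curv gam a b).
Proof. apply sm_inv. apply HU. apply smK. intros t u H; pose proof (HkU t u H); lra. Qed.

Lemma L8 u : dot (Dt (Nor gam) t0 u) (Bin gam t0 u) =
  / curv gam t0 u * (/ gspeed gam t0 u * (du qf t0 u +
     (ds gam (curv gam) t0 u * cos (th t0 u) - curv gam t0 u * sin (th t0 u) * psi3 gam th t0 u)
       * (gspeed gam t0 u * tors gam t0 u))).
Proof.
  pose proof (Hline u) as H.
  change (Dt (Nor gam) t0 u) with (Dt (fun a b => vscal (/ curv gam a b) (Ds gam (Tan gam) a b)) t0 u).
  rewrite (Dt_vscal2 U (fun a b => / curv gam a b) (Ds gam (Tan gam)) t0 u smKinv smDsT H).
  rewrite dot_addl, !dot_scall, (FR F_DsT t0 u H), dot_scall, (FR F_NB t0 u H).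
  change (Dt (Ds gam (Tan gam)) t0 u) with (Dt (fun a b => vscal (/ gspeed gam a b) (Du (Tan gam) a b)) t0 u).
  rewrite (Dt_vscal2 U (fun a b => / gspeed gam a b) (Du (Tan gam)) t0 u (s_ginv gam U HU HgamU HgU) (sm3_Du U _ smT) H).
  rewrite dot_addl, !dot_scall, (FR F_DuT t0 u H), dot_scall, (FR F_NB t0 u H).
  rewrite (sm3_schwarz U (Tan gam) t0 u HU smT H).
  pose proof (du_dot2 U (Dt (Tan gam)) (Bin gam) t0 u (sm3_Dt U _ smT) smB H) as E1.
  assert (E2 : du (fun a b => dot (Dt (Tan gam) a b) (Bin gam a b)) t0 u = du qf t0 u).
  { unfold du. apply Derive_ext. intro y. exact (L7B y). }
  pose proof (FR F_pars t0 u H (Dt (Tan gam) t0 u) (Du (Bin gam) t0 u)) as E3.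
  rewrite (FR dBT_u t0 u H), (FR dBB_u t0 u H), (FR dBN_u t0 u H), L7N, DuNB in E3.
  assert (E4 : dot (Du (Dt (Tan gam)) t0 u) (Bin gam t0 u) = du qf t0 u - dot (Dt (Tan gam) t0 u) (Du (Bin gam) t0 u)) by lra.
  rewrite E4, E3. ring.
Qed.

Definition mm u := cross (nu_th gam th t0 u) (Tan gam t0 u).

Lemma mT u : dot (mm u) (Tan gam t0 u) = 0.
Proof. apply cross_self_dot. Qed.
Lemma mN u : dot (mm u) (Nor gam t0 u) = sin (th t0 u).
Proof. unfold mm. rewrite triple. change (cross (Tan gam t0 u) (Nor gam t0 u)) with (Bin gam t0 u). apply nuB. Qed.
Lemma mB u : dot (mm u) (Bin gam t0 u) = - cos (th t0 u).
Proof. unfold mm. rewrite triple. unfold Bin at 1. rewrite cross_cross, dot_addr, !dot_scalr.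
  rewrite nuT, nuN, (FR F_TT t0 u (Hline u)). ring. Qed.
Lemma vm u v : dot v (mm u) = sin (th t0 u) * dot v (Nor gam t0 u) - cos (th t0 u) * dot v (Bin gam t0 u).
Proof. rewrite (FR F_pars t0 u (Hline u) v (mm u)), mT, mN, mB. ring. Qed.
Lemma num u : dot (nu_th gam th t0 u) (mm u) = 0.
Proof. unfold mm. rewrite dot_comm. apply cross_self_dot'. Qed.

Lemma sc1 x X : sin x * (- sin x * X) - cos x * (cos x * X) = - X.
Proof. pose proof (sin2_cos2 x) as H. unfold Rsqr in H.
  transitivity (- (sin x * sin x + cos x * cos x) * X); [ring | rewrite H; ring]. Qed.

Lemma Dunu_m u : dot (Du (nu_th gam th) t0 u) (mm u) = - (du th t0 u + dot (Du (Nor gam) t0 u) (Bin gam t0 u)).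
Proof. rewrite vm. destruct (Dunu u) as [E1 E2]. rewrite E1, E2. apply sc1. Qed.

Lemma Dtnu_m u : dot (Dt (nu_th gam th) t0 u) (mm u) = - (dt th t0 u + dot (Dt (Nor gam) t0 u) (Bin gam t0 u)).
Proof.
  pose proof (Hline u) as H.
  rewrite vm. rewrite (FR Dnu_t t0 u H).
  destruct (nu_alg (Nor gam t0 u) (Bin gam t0 u) (Dt (Nor gam) t0 u) (Dt (Bin gam) t0 u)
     (cos (th t0 u)) (sin (th t0 u)) (dt th t0 u)
     (FR F_NN t0 u H) (FR F_BB t0 u H) (FR F_NB t0 u H) (FR dNN_t t0 u H) (FR dBB_t t0 u H) (FR dBN_t t0 u H)) as [E1 E2].
  rewrite E1, E2. apply sc1.
Qed.

Lemma LDtt u : Dt (Dt gam) t0 u = vadd (vscal (dt (curv gam) t0 u) (nu_th gam th t0 u)) (vscal (curv gam t0 u) (Dt (nu_th gam th) t0 u)).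
Proof.
  rewrite (Dt_right S0 U (Dt gam) (fun a b => vscal (curv gam a b) (nu_th gam th a b)) t0 u (tbar - t0)).
  - exact (Dt_vscal2 U (curv gam) (nu_th gam th) t0 u smK (FR s_nu) (Hline u)).
  - exact (sm3_Dt S0 gam Hsg).
  - exact (sm3_vscal U HU _ _ smK (FR s_nu)).
  - unfold S0; lra.
  - exact (Hline u).
  - lra.
  - intros y Hy. apply Hflow. lra.
Qed.

Lemma LDuu u : Du (Du gam) t0 u = vadd (vscal (du (gspeed gam) t0 u) (Tan gam t0 u)) (vscal (gspeed gam t0 u) (Du (Tan gam) t0 u)).
Proof.
  change (Du (Du gam) t0 u) with (Dv (fun y => Du gam t0 y) u).
  rewrite (functional_extensionality (fun y => Du gam t0 y) (fun y => vscal (gspeed gam t0 y) (Tan gam t0 y))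
     (fun y => FR F_Du t0 y (Hline y))).
  exact (Du_vscal2 U (gspeed gam) (Tan gam) t0 u (s_g gam U HU HgamU HgU) smT (Hline u)).
Qed.

Lemma main_pt u : gauss_curv gam t0 u = K.
Proof.
  pose proof (Hline u) as H.
  pose proof (HgU t0 u H) as Hg0. pose proof (HkU t0 u H) as Hk0.
  destruct (Hreg t0 u Ht0) as [_ [_ Hp2]].
  unfold gauss_curv. cbv zeta.
  rewrite (L1 u), (FR F_Du t0 u H).
  assert (Hn : vscal (/ vnorm (cross (vscal (curv gam t0 u) (nu_th gam th t0 u)) (vscal (gspeed gam t0 u) (Tan gam t0 u))))
                 (cross (vscal (curv gam t0 u) (nu_th gam th t0 u)) (vscal (gspeed gam t0 u) (Tan gam t0 u))) = mm u).
  { rewrite cross_scall, cross_scalr. apply norm_unit; try lra.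
    unfold mm. rewrite lagrange, nunu, (FR F_TT t0 u H), nuT. ring. }
  rewrite Hn.
  rewrite (LDtt u), (L2 u), (LDuu u).
  rewrite !dot_addl, !dot_scall, !dot_scalr, !num, Dunu_m, Dtnu_m, (FR F_DuT t0 u H), dot_scall.
  rewrite (dot_comm (Tan gam t0 u) (mm u)), mT, (dot_comm (Nor gam t0 u) (mm u)), mN.
  rewrite nunu, nuT, (FR F_TT t0 u H).
  rewrite L8, q_der, DuNB, (du_eq th).
  destruct (Hflow t0 u Ht0) as [_ Hth]. rewrite Hth.
  unfold upsilon, psi1, psi2 in *. cbv zeta. unfold psi3.
  assert (Hs : sin (th t0 u) <> 0) by (intro E; apply Hp2; rewrite E; ring).
  clear Hth Hflow Hreg Hn.
  field. repeat split; lra.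
Qed.

End Main.


Theorem mainTheorem18 (K tbar : R) (gam : R -> R -> V3) (th : R -> R -> R) :
  0 < tbar ->
  (* smoothness on an open strip (a, tbar) x R containing [0, tbar) x R *)
  (exists a, a < 0 /\
     smooth_on3 (fun t _ => a < t < tbar) gam /\
     smooth_on (fun t _ => a < t < tbar) th) ->
  (* closed curves parametrized over S^1 = R / 2 pi Z; theta an angle function *)
  (forall t u, 0 <= t < tbar -> gam t (u + 2 * PI) = gam t u) ->
  (forall t u, 0 <= t < tbar ->
     cos (th t (u + 2 * PI)) = cos (th t u) /\ sin (th t (u + 2 * PI)) = sin (th t u)) ->
  (* regularity: g > 0, kappa > 0, psi_2 <> 0 *)
  (forall t u, 0 <= t < tbar ->
     0 < gspeed gam t u /\ 0 < curv gam t u /\ psi2 gam th t u <> 0) ->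
  (* framed curvature flow *)
  (forall t u, 0 <= t < tbar ->
     Dt gam t u = vscal (curv gam t u) (nu_th gam th t u) /\
     dt th t u = upsilon gam th K t u) ->
  (* the trajectory surface has constant Gaussian curvature K *)
  forall t u, 0 <= t < tbar -> gauss_curv gam t u = K.
Proof.
  intros Htb [a [Ha [Hsg Hsth]]] Hper Hperth Hreg Hflow t u Ht.
  exact (main_pt K tbar a gam th Ha Hsg Hsth Hreg Hflow t Ht u).
Qed.
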